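(* Let $\theta\in\mathbb R$ and $\epsilon>0$. If $U$ is a Clifford+$T$ operator and $\lambda$ a unit scalar with $\|R_z(\theta)-\lambda U\|\le\epsilon$, then there exist $\lambda'\in\{1,e^{i\pi/8}\}$ and a Clifford+$T$ operator $U'$ with the same $T$-count as $U$ such that $\|R_z(\theta)-\lambda'U'\|\le\epsilon$. Thus, in the approximate synthesis problem for $z$-rotations up to a phase, it suffices to consider only the scalars $\lambda=1$ and $\lambda=e^{i\pi/8}$.
   Context: Let $\omega=e^{i\pi/4}$, $H=\frac{1}{\sqrt2}\begin{bmatrix}1&1\\1&-1\end{bmatrix}$, $S=\begin{bmatrix}1&0\\0&i\end{bmatrix}$, $T=\begin{bmatrix}1&0\\0&\omega\end{bmatrix}$. A Clifford+$T$ operator is an element of the group generated by $\omega I,H,S,T$; its $T$-count is the minimal number of occurrences of $T$ or $T^{-1}$ in a word in these generators and their inverses representing it. $R_z(\theta)=\begin{bmatrix}e^{-i\theta/2}&0\\0&e^{i\theta/2}\end{bmatrix}$. The approximate synthesis problem for $z$-rotations up to a phase asks, given $\theta$ and $\epsilon$, for a Clifford+$T$ operator $U$ (of smallest possible $T$-count) and a unit scalar $\lambda$ with $\|R_z(\theta)-\lambda U\|\le\epsilon$, where $\|\cdot\|$ is the operator norm. *)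

(* Defs.v *)
From HB Require Import structures.
From mathcomp Require Import all_boot all_order all_algebra.
From mathcomp Require Import complex.
From mathcomp Require Import classical_sets reals trigo.
Set Implicit Arguments. Unset Strict Implicit. Unset Printing Implicit Defensive.
Import Order.TTheory GRing.Theory Num.Theory.
Local Open Scope ring_scope.
Local Open Scope complex_scope.

Section CliffordT.
Variable R : realType.
Local Notation C := R[i].

Definition expi (x : R) : C := (cos x) +i* (sin x).

Definition omega : C := expi (pi / 4).

Definition mxH : 'M[C]_2 :=
  ((Num.sqrt (2 : R))^-1)%:C *: \matrix_(i < 2, j < 2)
     (if (i == 1) && (j == 1) then -1 else 1).
Definition mxS : 'M[C]_2 :=
  \matrix_(i < 2, j < 2) (if i == j then (if i == 1 then 'i else 1) else 0).
Definition mxT : 'M[C]_2 :=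
  \matrix_(i < 2, j < 2) (if i == j then (if i == 1 then omega else 1) else 0).
Definition mxOmegaI : 'M[C]_2 := omega%:M.

Definition Rz (theta : R) : 'M[C]_2 :=
  \matrix_(i < 2, j < 2)
    (if i == j then (if i == 1 then expi (theta / 2) else expi (- (theta / 2)))
     else 0).

Inductive gen := GOmega | GH | GS | GT.

Definition gen_mx (g : gen) : 'M[C]_2 :=
  match g with GOmega => mxOmegaI | GH => mxH | GS => mxS | GT => mxT end.

Definition letter := (gen * bool)%type.

Definition letter_mx (l : letter) : 'M[C]_2 :=
  if l.2 then invmx (gen_mx l.1) else gen_mx l.1.

Definition word_mx (w : seq letter) : 'M[C]_2 :=
  foldr (fun l M => letter_mx l *m M) 1%:M w.

Definition word_tcount (w : seq letter) : nat :=
  count (fun l : letter => if l.1 is GT then true else false) w.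

Definition clifford_t (U : 'M[C]_2) : Prop := exists w, word_mx w = U.

Definition is_tcount (U : 'M[C]_2) (n : nat) : Prop :=
  (exists w, word_mx w = U /\ word_tcount w = n) /\
  (forall w, word_mx w = U -> (n <= word_tcount w)%N).

Definition cmod (z : C) : R := Num.sqrt (complex.Re z ^+ 2 + complex.Im z ^+ 2).

Definition vnorm (v : 'cV[C]_2) : R :=
  Num.sqrt (cmod (v 0 0) ^+ 2 + cmod (v 1 0) ^+ 2).

Definition opnorm (A : 'M[C]_2) : R :=
  sup [set vnorm (A *m v) | v in [set v : 'cV[C]_2 | vnorm v = 1]].

End CliffordT.

(* Main.v *)
Require Import Defs.
From HB Require Import structures.
From mathcomp Require Import all_boot all_order all_algebra.
From mathcomp Require Import complex.
From mathcomp Require Import classical_sets reals trigo.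
From mathcomp Require Import ring lra.
Import Order.TTheory GRing.Theory Num.Theory.
Local Open Scope ring_scope.
Local Open Scope complex_scope.
Set Implicit Arguments. Unset Strict Implicit. Unset Printing Implicit Defensive.

Section S.
Variable R : realType.
Local Notation C := R[i].

Lemma eqC (a b c d : R) : a = c -> b = d -> a +i* b = c +i* d :> C.
Proof. by move=> -> ->. Qed.

Lemma expiD x y : expi (x + y) = expi x * expi y :> C.
Proof. rewrite /expi sinD cosD /=; apply: eqC; ring. Qed.

Lemma expiJ x : expi x * (expi x)^* = 1 :> C.
Proof. rewrite /expi /=; apply: eqC; last ring. rewrite -(cos2Dsin2 x); ring. Qed.

Lemma expi0 : expi 0 = 1 :> C.
Proof. by rewrite /expi cos0 sin0. Qed.

Lemma expipi : expi pi = -1 :> C.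
Proof. by rewrite /expi cospi sinpi; apply: eqC => //; rewrite oppr0. Qed.

Lemma normJ (z : C) : `|z| ^+ 2 = z * z^*.
Proof. rewrite -add_Re2_Im2; case: z => a b /=; apply: eqC => /=; ring. Qed.

Lemma cmodE (z : C) : (cmod z)%:C = `|z|.
Proof. by rewrite normc_def. Qed.

Definition ctr n m (M : 'M[C]_(n, m)) : 'M[C]_(m, n) := map_mx conjc (M^T).

Lemma ctr_mul n m p (A : 'M[C]_(n, m)) (B : 'M[C]_(m, p)) : ctr (A *m B) = ctr B *m ctr A.
Proof. by rewrite /ctr trmx_mul map_mxM. Qed.

Lemma ctrD n m (A B : 'M[C]_(n, m)) : ctr (A + B) = ctr A + ctr B.
Proof. by apply/matrixP => i j; rewrite !mxE rmorphD. Qed.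

Lemma ctrN n m (A : 'M[C]_(n, m)) : ctr (- A) = - ctr A.
Proof. by apply/matrixP => i j; rewrite !mxE rmorphN. Qed.

Lemma ctrZ n m a (A : 'M[C]_(n, m)) : ctr (a *: A) = a^* *: ctr A.
Proof. by apply/matrixP => i j; rewrite !mxE rmorphM. Qed.

Lemma ctrK n m (A : 'M[C]_(n, m)) : ctr (ctr A) = A.
Proof. by apply/matrixP => i j; rewrite !mxE conjcK. Qed.

Lemma sum2 (F : 'I_2 -> C) : \sum_(k < 2) F k = F 0 + F 1.
Proof. rewrite big_ord_recr big_ord1 /=; congr (F _ + F _); exact: val_inj. Qed.

Lemma ord2 (i : 'I_2) : i = 0 \/ i = 1.
Proof. case: i => [[|[|//]]] Hi; [left|right]; exact: val_inj. Qed.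

Lemma test : (0 == 1 :> 'I_2) = false.
Proof. by []. Qed.

Lemma Rz_ctr th : ctr (Rz th) *m Rz th = 1 :> 'M[C]_2.
Proof.
apply/matrixP => i j; rewrite !mxE sum2 !mxE.
have [->|->] := ord2 i; have [->|->] := ord2 j => /=;
  rewrite ?mul0r ?mulr0 ?addr0 ?add0r //;
  first [ by rewrite mulrC; apply: expiJ | by apply: eqC => /=; ring ].
Qed.

Lemma lift00 : lift (0 : 'I_2) (0 : 'I_1) = 1.
Proof. exact: val_inj. Qed.
Lemma lift10 : lift (1 : 'I_2) (0 : 'I_1) = 0.
Proof. exact: val_inj. Qed.

Lemma m1e (i j : 'I_2) : (-1 : C) ^+ (i + j)%N = if i == j then 1 else -1.
Proof.
have [->|->] := ord2 i; have [->|->] := ord2 j; rewrite -signr_odd //.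
Qed.

Lemma det22 (A : 'M[C]_2) : \det A = A 0 0 * A 1 1 - A 0 1 * A 1 0.
Proof.
rewrite (expand_det_row _ 0) sum2 /cofactor !det_mx11 !mxE lift00 lift10 !m1e /=.
by rewrite mul1r mulN1r mulrN.
Qed.

Lemma adj22 (A : 'M[C]_2) : \adj A = \matrix_(i < 2, j < 2)
  (if i == 0 then (if j == 0 then A 1 1 else - A 0 1)
   else (if j == 0 then - A 1 0 else A 0 0)).
Proof.
apply/matrixP => i j; rewrite !mxE /cofactor !det_mx11 !mxE m1e.
by have [->|->] := ord2 i; have [->|->] := ord2 j => /=;
rewrite !(lift00, lift10) ?mul1r ?mulN1r.
Qed.

Lemma su2_adj (A : 'M[C]_2) : ctr A *m A = 1 -> \det A = 1 -> ctr A = \adj A.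
Proof.
move=> hu hd.
by rewrite -[ctr A]mulmx1 -hd -mul_mx_adj mulmxA hu mul1mx.
Qed.

Lemma su2_sum (A : 'M[C]_2) : ctr A *m A = 1 -> \det A = 1 ->
  A + ctr A = (\tr A)%:M.
Proof.
move=> hu hd; rewrite su2_adj // adj22; apply/matrixP => i j.
rewrite !mxE /mxtrace sum2.
by have [->|->] := ord2 i; have [->|->] := ord2 j => /=;
  rewrite ?addr0 ?subrr ?mulr1n ?mulr0n // addrC.
Qed.

Lemma su2_tr (A : 'M[C]_2) : ctr A *m A = 1 -> \det A = 1 ->
  \tr A = (2 * complex.Re (A 0 0))%:C.
Proof.
move=> hu hd.
have h : (A 0 0)^* = A 1 1.
  have := su2_adj hu hd; rewrite adj22 => /matrixP /(_ 0 0); by rewrite !mxE.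
by rewrite /mxtrace sum2 -h addcJ rmorphM /= rmorph_nat.
Qed.

Definition ip (v : 'cV[C]_2) := (ctr v *m v) 0 0.

Lemma vnormE v : (vnorm v ^+ 2)%:C = ip v.
Proof.
rewrite /vnorm sqr_sqrtr ?addr_ge0 ?sqr_ge0 // rmorphD !rmorphXn /= !cmodE !normJ.
by rewrite /ip !mxE sum2 !mxE mulrC [_ * (v 1 0)^*]mulrC.
Qed.

Lemma vnorm_mul (X : 'M[C]_2) v :
  (vnorm (X *m v) ^+ 2)%:C = (ctr v *m (ctr X *m X) *m v) 0 0.
Proof. by rewrite vnormE /ip ctr_mul !mulmxA. Qed.

Lemma quad_scalar s v : (ctr v *m s%:M *m v) 0 0 = s * ip v.
Proof. by rewrite mul_mx_scalar -scalemxAl mxE. Qed.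

Definition e (i : 'I_2) : 'cV[C]_2 := delta_mx i 0.

Lemma quad_delta (M : 'M[C]_2) i : (ctr (e i) *m M *m e i) 0 0 = M i i.
Proof.
rewrite !mxE sum2 !mxE !sum2 !mxE !conjc_nat.
by have [->|->] := ord2 i => /=; rewrite ?mulr0n ?mulr1n ?mul0r ?mulr0 ?mul1r ?mulr1 ?addr0 ?add0r.
Qed.

Lemma vnorm_e i : vnorm (e i) = 1.
Proof.
rewrite /vnorm /cmod !mxE.
have [->|->] := ord2 i => /=; 
by rewrite ?expr1n ?(expr2 0) ?mul0r ?addr0 ?add0r ?sqrtr0 ?sqrtr1 ?expr1n ?(expr2 0) ?mul0r ?addr0 ?add0r ?sqrtr1.
Qed.

Lemma gram (P U : 'M[C]_2) (mu : C) : ctr P *m P = 1 -> ctr U *m U = 1 ->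
  mu * mu^* = 1 ->
  ctr (P - mu *: U) *m (P - mu *: U) =
  1 + 1 - (mu *: (ctr P *m U) + ctr (mu *: (ctr P *m U))).
Proof.
move=> hP hU hm.
rewrite ctrD ctrN !ctrZ ctr_mul ctrK mulmxDl !mulmxDr !mulmxN !mulNmx hP.
rewrite -!scalemxAl -!scalemxAr scalerA mulrC hm scale1r hU.
by rewrite opprK opprD [in LHS](addrC (- _) 1) addrACA.
Qed.

Lemma cmod_ge0 (z : C) : 0 <= cmod z.
Proof. exact: sqrtr_ge0. Qed.

Lemma cmodD (x y : C) : cmod (x + y) <= cmod x + cmod y.
Proof. by rewrite -lecR rmorphD /= !cmodE ler_normD. Qed.

Lemma cmodM (x y : C) : cmod (x * y) = cmod x * cmod y.
Proof. by apply: complexI; rewrite rmorphM /= !cmodE normrM. Qed.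

Lemma unit_coord (v : 'cV[C]_2) (i : 'I_2) : vnorm v = 1 -> cmod (v i 0) <= 1.
Proof.
move=> hv.
have h : cmod (v 0 0) ^+ 2 + cmod (v 1 0) ^+ 2 = 1.
  by move: hv; rewrite /vnorm => /(congr1 (fun x => x ^+ 2)); rewrite sqr_sqrtr ?addr_ge0 ?sqr_ge0 // expr1n.
have h0 := cmod_ge0 (v 0 0); have h1 := cmod_ge0 (v 1 0).
have [->|->] := ord2 i; nra.
Qed.

Lemma bounded (M : 'M[C]_2) :
  has_ubound [set vnorm (M *m v) | v in [set v | vnorm v = 1]].
Proof.
pose b (i : 'I_2) := cmod (M i 0) + cmod (M i 1).
exists (b 0 + b 1) => y [v /= hv <-].
have hc : forall i, cmod ((M *m v) i 0) <= b i.
  move=> i; rewrite mxE sum2; apply: le_trans (cmodD _ _) _.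
  rewrite !cmodM /b.
  have := unit_coord 0 hv; have := unit_coord 1 hv.
  have := cmod_ge0 (v 0 0); have := cmod_ge0 (v 1 0).
  have := cmod_ge0 (M i 0); have := cmod_ge0 (M i 1).
  nra.
have h0 := hc 0; have h1 := hc 1.
have g0 := cmod_ge0 ((M *m v) 0 0); have g1 := cmod_ge0 ((M *m v) 1 0).
have hb : 0 <= b 0 + b 1 by nra.
rewrite /vnorm -[b 0 + b 1]ger0_norm // -sqrtr_sqr ler_sqrt ?sqr_ge0 //.
nra.
Qed.

Lemma opnorm_cmp (X Y : 'M[C]_2) (s eps : R) :
  (forall v, vnorm v = 1 -> vnorm (X *m v) = s) ->
  (exists i, s <= vnorm (Y *m e i)) -> opnorm Y <= eps -> opnorm X <= eps.
Proof.
move=> hX [i hi] hY; apply: le_trans hY; rewrite /opnorm.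
apply: ge_sup.
  by exists (vnorm (X *m e 0)), (e 0) => //; exact: vnorm_e.
move=> y [v hv <-]; rewrite hX //; apply: le_trans hi _.
apply: (ub_le_sup (bounded Y)).
by exists (e i) => //; exact: vnorm_e.
Qed.

Lemma unitC (z : C) : z * z^* = 1 -> complex.Re z <= 1.
Proof.
case: z => a b /= /(congr1 (@complex.Re R)) /= h.
nra.
Qed.

Lemma realCD (x y : R) : (x + y)%:C = x%:C + y%:C :> C.
Proof. by rewrite rmorphD. Qed.

Lemma conjM (x y : C) : (x * y)^* = x^* * y^*.
Proof. by rewrite rmorphM. Qed.

Lemma unitM (x y : C) : x * x^* = 1 -> y * y^* = 1 -> (x * y^*) * (x * y^*)^* = 1.
Proof.
case: x => a b; case: y => c d.
move=> /(congr1 (@complex.Re R)) /= hx /(congr1 (@complex.Re R)) /= hy.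
apply: eqC => /=; last ring.
transitivity ((a * a - b * - b) * (c * c - d * - d)); first ring.
by rewrite hx hy mulr1.
Qed.

Lemma tr_ctr (M : 'M[C]_2) : \tr (ctr M) = (\tr M)^*.
Proof. by rewrite /mxtrace !sum2 !mxE rmorphD. Qed.

Lemma scal2 (r : R) : (1 + 1 - (r%:C)%:M : 'M[C]_2) = ((2 - r)%:C)%:M.
Proof.
apply/matrixP => i j; rewrite !mxE.
case: (i == j); rewrite ?mulr1n ?mulr0n.
  by rewrite rmorphB /= rmorph_nat.
by rewrite subr0 addr0.
Qed.

Lemma core (th eps : R) (U : 'M[C]_2) (lam sig : C) :
  ctr U *m U = 1 -> sig * sig^* = 1 -> lam * lam^* = 1 ->
  \det (sig *: (ctr (Rz th) *m U)) = 1 ->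
  0 <= complex.Re (\tr (sig *: (ctr (Rz th) *m U))) ->
  opnorm (Rz th - lam *: U) <= eps -> opnorm (Rz th - sig *: U) <= eps.
Proof.
move=> hU hs hl hdet.
set P := Rz th; set A := sig *: (ctr P *m U) => hre hY.
have hP : ctr P *m P = 1 := Rz_ctr th.
have hAu : ctr A *m A = 1.
  rewrite /A ctrZ ctr_mul ctrK -scalemxAl -scalemxAr scalerA mulmxA.
  by rewrite -(mulmxA _ P) (mulmx1C hP) mulmx1 hU mulrC hs scale1r.
have htr := su2_tr hAu hdet.
set r := 2 * complex.Re (A 0 0) in htr.
have hr : 0 <= r by move: hre; rewrite htr.
have hsum := su2_sum hAu hdet.
apply: (opnorm_cmp (s := Num.sqrt (2 - r))) hY.
  move=> v hv.
  have := vnorm_mul (P - sig *: U) v.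
  rewrite gram // -/A hsum htr scal2 quad_scalar -vnormE hv expr1n mulr1.
  move/complexI => <-.
  by rewrite sqrtr_sqr ger0_norm // sqrtr_ge0.
set nu := lam * sig^*.
have hB : lam *: (ctr P *m U) = nu *: A.
  by rewrite /A scalerA /nu -mulrA [sig^* * sig]mulrC hs mulr1.
have hT : \tr (ctr (P - lam *: U) *m (P - lam *: U)) =
    (2 + 2 - 2 * complex.Re nu * r)%:C.
  rewrite gram // hB ctrZ raddfB /= !mxtraceD (mxtraceZ nu) (mxtraceZ nu^*) tr_ctr htr conjc_real.
  by rewrite mxtrace1 -mulrDl addcJ !rmorphB !rmorphD !rmorphM /= !rmorph_nat rmorph1.
have hW : ((vnorm ((P - lam *: U) *m e 0)) ^+ 2 + (vnorm ((P - lam *: U) *m e 1)) ^+ 2)%:C =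
    (2 + 2 - 2 * complex.Re nu * r)%:C.
  by rewrite -hT realCD !vnorm_mul !quad_delta /mxtrace sum2.
move/complexI: hW => hW.
have hnu : complex.Re nu <= 1.
  by apply: unitC; apply: unitM.
have fin : forall i, 2 - r <= vnorm ((P - lam *: U) *m e i) ^+ 2 ->
    Num.sqrt (2 - r) <= vnorm ((P - lam *: U) *m e i).
  move=> i h; rewrite -[vnorm _]ger0_norm ?sqrtr_ge0 // -sqrtr_sqr.
  by rewrite ler_sqrt ?sqr_ge0.
have [h|h] := leP (2 - r) (vnorm ((P - lam *: U) *m e 0) ^+ 2).
  by exists 0; apply: fin.
exists 1; apply: fin; nra.
Qed.

Local Notation om := (@omega R).

Definition zeta : C := expi (pi / 8).

Lemma expiX x n : expi x ^+ n = expi (x *+ n) :> C.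
Proof.
elim: n => [|n IH]; first by rewrite expr0 mulr0n expi0.
by rewrite exprS IH mulrS expiD.
Qed.

Lemma zeta8 : zeta ^+ 8 = -1.
Proof.
rewrite /zeta expiX (_ : pi / 8 *+ 8 = pi); first exact: expipi.
by by rewrite -mulr_natr; field.
Qed.

Lemma zeta2 : zeta ^+ 2 = om.
Proof.
rewrite /zeta /omega expiX; congr expi.
by rewrite -mulr_natr; field.
Qed.

Lemma om8 : om ^+ 8 = 1.
Proof. by rewrite -zeta2 -exprM (_ : (2 * 8 = 8 * 2)%N) // exprM zeta8 expr2 mulrNN mulr1. Qed.

Lemma om4 : om ^+ 4 = -1.
Proof. by rewrite -zeta2 -exprM zeta8. Qed.

Lemma om2 : om ^+ 2 = 'i.
Proof.
rewrite /omega expiX (_ : pi / 4 *+ 2 = pi / 2).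
  by rewrite /expi cos_pihalf sin_pihalf.
by rewrite -mulr_natr; field.
Qed.

Lemma omJ : om * om^* = 1.
Proof. exact: expiJ. Qed.

Lemma om_neq0 : om != 0.
Proof. by apply/eqP => h; have := omJ; rewrite h mul0r => /eqP; rewrite eq_sym oner_eq0. Qed.

Definition good (M : 'M[C]_2) := ctr M *m M = 1 /\ exists k, \det M = om ^+ k.

Lemma ctr_scalar (a : C) : ctr (a%:M : 'M[C]_2) = (a^*)%:M.
Proof.
apply/matrixP => i j; rewrite !mxE eq_sym.
by case: (i == j); rewrite ?mulr1n ?mulr0n ?conjc0.
Qed.

Lemma good_omega : good (mxOmegaI R).
Proof.
split; last by exists 2%N; rewrite /mxOmegaI det_scalar.
by rewrite /mxOmegaI ctr_scalar -scalar_mxM mulrC omJ.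
Qed.

Lemma good_T : good (mxT R).
Proof.
split; last first.
  exists 1%N; rewrite det22 !mxE /=.
  by rewrite mul1r mul0r subr0 expr1.
apply/matrixP => i j; rewrite !mxE sum2 !mxE.
by have [->|->] := ord2 i; have [->|->] := ord2 j => /=;
  first [ by apply: eqC => /=; ring | by rewrite mulr0 add0r mulrC; apply: omJ ].
Qed.

Lemma good_S : good (mxS R).
Proof.
split; last first.
  exists 2%N; rewrite det22 !mxE /= om2.
  by apply: eqC => /=; ring.
apply/matrixP => i j; rewrite !mxE sum2 !mxE.
by have [->|->] := ord2 i; have [->|->] := ord2 j => /=; apply: eqC => /=; ring.
Qed.

Lemma s2 : (Num.sqrt (2 : R))^-1 * (Num.sqrt (2 : R))^-1 = 1 / 2.
Proof.
rewrite -invfM -expr2 sqr_sqrtr; last lra.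
by rewrite div1r.
Qed.

Lemma good_H : good (mxH R).
Proof.
have hs := s2.
split; last first.
  exists 4%N; rewrite det22 !mxE /= om4.
  apply: eqC => /=; nra.
apply/matrixP => i j; rewrite !mxE sum2 !mxE.
by have [->|->] := ord2 i; have [->|->] := ord2 j => /=; apply: eqC => /=; nra.
Qed.

Lemma good1 : good (1%:M : 'M[C]_2).
Proof.
split; last by exists 0%N; rewrite det1 expr0.
apply/matrixP => i j; rewrite !mxE sum2 !mxE.
by have [->|->] := ord2 i; have [->|->] := ord2 j => /=; apply: eqC => /=; ring.
Qed.

Lemma good_mul (A B : 'M[C]_2) : good A -> good B -> good (A *m B).
Proof.
move=> [hA [k hk]] [hB [l hl]]; split; last by exists (k + l)%N; rewrite det_mulmx hk hl exprD.
by rewrite ctr_mul mulmxA -(mulmxA _ (ctr A)) hA mulmx1 hB.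
Qed.

Lemma good_inv (G : 'M[C]_2) : good G -> good (invmx G).
Proof.
move=> [hG [k hk]].
have hG' := mulmx1C hG.
have [hu _] := mulmx1_unit hG'.
have hi : invmx G = ctr G.
  by rewrite -[invmx G]mulmx1 -hG' mulmxA mulVmx // mul1mx.
split; first by rewrite hi ctrK.
exists (7 * k)%N; rewrite det_inv hk.
apply: (mulIf (expf_neq0 k om_neq0)); rewrite mulVf ?expf_neq0 ?om_neq0 //.
by rewrite -exprD (_ : (7 * k + k = 8 * k)%N) ?exprM ?om8 ?expr1n // mulSn addnC.
Qed.

Lemma good_letter (l : letter) : good (letter_mx R l).
Proof.
have hg : forall g, good (gen_mx R g).
  by case; [exact: good_omega | exact: good_H | exact: good_S | exact: good_T].
by case: l => g [] /=; [apply: good_inv|]; apply: hg.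
Qed.

Lemma good_word (w : seq letter) : good (word_mx R w).
Proof.
elim: w => [|l w IH] /=; first exact: good1.
exact: good_mul (good_letter l) IH.
Qed.

Lemma word_om j w : word_mx R (nseq j (GOmega, false) ++ w) = om ^+ j *: word_mx R w.
Proof.
elim: j => [|j IH] /=; first by rewrite expr0 scale1r.
by rewrite IH /letter_mx /= /mxOmegaI mul_scalar_mx scalerA exprS.
Qed.

Lemma word_omi j w : word_mx R (nseq j (GOmega, true) ++ w) = om^-1 ^+ j *: word_mx R w.
Proof.
elim: j => [|j IH] /=; first by rewrite expr0 scale1r.
by rewrite IH /letter_mx /= /mxOmegaI invmx_scalar mul_scalar_mx scalerA exprS.
Qed.

Lemma tc_om j b w : word_tcount (nseq j (GOmega, b) ++ w) = word_tcount w.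
Proof. by rewrite /word_tcount count_cat count_nseq /= mul0n. Qed.

Lemma tcount_scale j (U : 'M[C]_2) n : is_tcount U n <-> is_tcount (om ^+ j *: U) n.
Proof.
have hinv : om^-1 ^+ j * om ^+ j = 1 by rewrite -exprMn mulVf ?om_neq0 // expr1n.
have hinv' : om ^+ j * om^-1 ^+ j = 1 by rewrite mulrC.
split.
  move=> [[w [hw hn]] hmin]; split.
    by exists (nseq j (GOmega, false) ++ w); rewrite word_om hw tc_om.
  move=> w' hw'; rewrite -(tc_om j true); apply: hmin.
  by rewrite word_omi hw' scalerA hinv scale1r.
move=> [[w [hw hn]] hmin]; split.
  exists (nseq j (GOmega, true) ++ w); rewrite word_omi hw tc_om.
  by rewrite scalerA hinv scale1r.
move=> w' hw'; rewrite -(tc_om j false); apply: hmin.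
by rewrite word_om hw'.
Qed.

Lemma detRz th : \det (Rz th) = 1 :> C.
Proof.
rewrite det22 !mxE /= mul0r subr0 -expiD addNr; exact: expi0.
Qed.

Lemma detRzc th : \det (ctr (Rz th)) = 1 :> C.
Proof.
have := congr1 determinant (Rz_ctr th).
by rewrite det_mulmx detRz mulr1 det1.
Qed.

Lemma zetaJ m : zeta ^+ m * (zeta ^+ m)^* = 1.
Proof. rewrite /zeta expiX; exact: expiJ. Qed.

Lemma zeta16 q : zeta ^+ (16 * q) = 1.
Proof. by rewrite exprM (_ : 16 = 8 * 2)%N // exprM zeta8 expr2 mulrNN mulr1 expr1n. Qed.

Lemma finish th eps (U : 'M[C]_2) w lam m :
  word_mx R w = U -> ctr U *m U = 1 -> lam * lam^* = 1 ->
  \det (zeta ^+ m *: (ctr (Rz th) *m U)) = 1 ->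
  0 <= complex.Re (\tr (zeta ^+ m *: (ctr (Rz th) *m U))) ->
  opnorm (Rz th - lam *: U) <= eps ->
  exists (lambda' : C) (U' : 'M[C]_2),
    (lambda' = 1 \/ lambda' = expi (pi / 8)) /\
    clifford_t U' /\
    (forall n : nat, is_tcount U n <-> is_tcount U' n) /\
    opnorm (Rz th - lambda' *: U') <= eps.
Proof.
move=> hw hU hl hd hr hY.
have hc := core hU (zetaJ m) hl hd hr hY.
exists (zeta ^+ (odd m)), (om ^+ (m./2) *: U); split.
  by case: (odd m); [right; rewrite expr1 | left; rewrite expr0].
split; first by exists (nseq (m./2) (GOmega, false) ++ w); rewrite word_om hw.
split; first by move=> n; exact: tcount_scale.
by rewrite scalerA -zeta2 -exprM -exprD mul2n odd_double_half.
Qed.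

Lemma ReN (z : C) : complex.Re (- z) = - complex.Re z.
Proof. by case: z. Qed.

Lemma dvd_exp k m : (8 %| m + k)%N -> (m * 2 + 2 * k = 16 * ((m + k) %/ 8))%N.
Proof.
move=> h; have := divnK h; move: ((m + k) %/ 8)%N => q hq.
by rewrite mulnC -mulnDr -hq mulnA mulnAC.
Qed.

Lemma main_sec (theta eps : R) (U : 'M[C]_2) (lambda : C) :
  clifford_t U -> cmod lambda = 1 ->
  opnorm (Rz theta - lambda *: U) <= eps ->
  exists (lambda' : C) (U' : 'M[C]_2),
    (lambda' = 1 \/ lambda' = expi (pi / 8)) /\
    clifford_t U' /\
    (forall n : nat, is_tcount U n <-> is_tcount U' n) /\
    opnorm (Rz theta - lambda' *: U') <= eps.
Proof.
move=> [w hw] hl hY.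
have [hU [k hk]] := good_word w; rewrite hw in hU hk.
have hlam : lambda * lambda^* = 1.
  by rewrite -normJ -cmodE hl expr1n.
set M := ctr (Rz theta) *m U.
have key : forall m, (8 %| m + k)%N -> \det (zeta ^+ m *: M) = 1.
  move=> m hm; rewrite detZ det_mulmx detRzc mul1r hk -exprM -zeta2 -exprM -exprD.
  by rewrite dvd_exp // zeta16.
set m0 := (8 - k %% 8)%N.
have hm0 : (8 %| m0 + k)%N.
  rewrite /m0 {2}(divn_eq k 8) addnCA subnK; last exact: ltnW (ltn_pmod k (isT : (0 < 8)%N)).
  exact: dvdn_add (dvdn_mull _ (dvdnn 8)) (dvdnn 8).
have hm8 : (8 %| (m0 + 8) + k)%N by rewrite addnAC dvdn_add // dvdnn.
have [hpos|hneg] := leP 0 (complex.Re (\tr (zeta ^+ m0 *: M))).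
  exact: (finish hw hU hlam (key _ hm0) hpos hY).
apply: (finish hw hU hlam (key _ hm8) _ hY).
rewrite exprD zeta8 mulrN1 scaleNr raddfN /= ReN oppr_ge0.
exact: ltW.
Qed.
End S.

Unset Implicit Arguments.

Theorem corollary7p20 (R : realType) (theta eps : R) (heps : 0 < eps)
    (U : 'M[R[i]]_2) (lambda : R[i]) :
  clifford_t U -> cmod lambda = 1 ->
  opnorm (Rz theta - lambda *: U) <= eps ->
  exists (lambda' : R[i]) (U' : 'M[R[i]]_2),
    (lambda' = 1 \/ lambda' = expi (pi / 8)) /\
    clifford_t U' /\
    (forall n : nat, is_tcount U n <-> is_tcount U' n) /\
    opnorm (Rz theta - lambda' *: U') <= eps.
Proof. exact: main_sec. Qed.
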